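(* Let $E,F,G$ be Banach spaces over $\mathbb{K}$. (a) Let $P\in\mathcal{P}(^mE;F)$ be a surjective polynomial. If either $n=1$, or $n$ is odd and $\mathbb{K}=\mathbb{R}$, then $\Delta^n_kP$ is injective for every $k\in\mathbb{N}$. (b) If $j\colon G\to E$ is a metric surjection, then $\Delta^1_kj\colon\mathcal{P}(^kE)\to\mathcal{P}(^kG)$ is a metric injection for every $k\in\mathbb{N}$. (c) If $u\in\mathcal{L}(E;F)$ is an isomorphism (respectively, an isometric isomorphism), then for every $k\in\mathbb{N}$, $\Delta^1_ku$ is an isomorphism (respectively, an isometric isomorphism) and $(\Delta^1_ku)^{-1}=\Delta^1_k(u^{-1})$.
   Context: Banach spaces are over $\mathbb{K}=\mathbb{R}$ or $\mathbb{C}$. $\mathcal{P}(^jX;Y)$ is the Banach space of continuous $j$-homogeneous polynomials $X\to Y$ with sup norm, $\mathcal{P}(^jX)=\mathcal{P}(^jX;\mathbb{K})$, and $\mathcal{L}(X;Y)$ the bounded linear operators (linear operators are $1$-homogeneous polynomials). For $P\in\mathcal{P}(^mE;F)$ and $n,k\in\mathbb{N}$, $\Delta^n_kP\colon\mathcal{P}(^kF)\to\mathcal{P}(^{mnk}E)$ is defined by $\Delta^n_kP(q)(x)=q(P(x))^n$. A metric surjection is a bounded linear operator $j\colon G\to E$ mapping the open unit ball of $G$ onto the open unit ball of $E$; a metric injection is a linear isometric embedding. *)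

(* Defs.v *)
From mathcomp Require Import all_boot all_order all_algebra.
From mathcomp Require Import all_classical all_reals all_analysis.
From mathcomp Require Export complex.
Import numFieldNormedType.Exports.
Set Implicit Arguments. Unset Strict Implicit. Unset Printing Implicit Defensive.
Import Order.TTheory GRing.Theory Num.Theory.
Local Open Scope ring_scope.
Local Open Scope classical_set_scope.

Section Polys.
Variable K : numFieldType.

Definition upd (X : Type) (j : nat) (v : 'I_j -> X) (i : 'I_j) (x : X) : 'I_j -> X :=
  fun l => if l == i then x else v l.

Definition multilinear (X Y : lmodType K) (j : nat) (A : ('I_j -> X) -> Y) : Prop :=
  forall (i : 'I_j) (v : 'I_j -> X) (a : K) (x y : X),
    A (upd v i (a *: x + y)) = a *: A (upd v i x) + A (upd v i y).

Definition hpoly (X Y : lmodType K) (j : nat) (P : X -> Y) : Prop :=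
  exists A : ('I_j -> X) -> Y, multilinear A /\ forall x, P x = A (fun _ => x).

Definition cpoly (X Y : normedModType K) (j : nat) (P : X -> Y) : Prop :=
  hpoly j P /\ continuous P.

Definition is_sup_norm (X : normedModType K) (q : X -> K^o) (c : K) : Prop :=
  (forall x : X, `|x| <= 1 -> `|q x| <= c) /\
  (forall d : K, (forall x : X, `|x| <= 1 -> `|q x| <= d) -> c <= d).

Definition polynorm (X : normedModType K) (q : X -> K^o) : K :=
  xget 0 [set c | is_sup_norm q c].

(* Part (a); Kreal records whether K is the real field *)
Definition thm6_a (Kreal : bool) (E F : completeNormedModType K) : Prop :=
  forall (m n k : nat) (P : E -> F),
    cpoly m P -> (forall y : F, exists x : E, P x = y) ->
    (n = 1%N \/ (odd n /\ Kreal)) ->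
    forall q1 q2 : F -> K^o, cpoly k q1 -> cpoly k q2 ->
      (fun x => q1 (P x) ^+ n) = (fun x => q2 (P x) ^+ n) -> q1 = q2.

Definition thm6_b (E G : completeNormedModType K) : Prop :=
  forall j : {linear G -> E}, continuous j ->
    j @` [set x | `|x| < 1] = [set y | `|y| < 1] ->
    forall (k : nat) (q : E -> K^o), cpoly k q ->
      cpoly k (q \o j) /\ polynorm (q \o j) = polynorm q.

Definition thm6_c (E F : completeNormedModType K) : Prop :=
  forall (u : {linear E -> F}) (v : F -> E),
    continuous u -> continuous v -> cancel u v -> cancel v u ->
    forall k : nat,
      ((forall q : F -> K^o, cpoly k q -> cpoly k (q \o u)) /\
       (forall q : E -> K^o, cpoly k q -> cpoly k (q \o v)) /\
       (forall q : F -> K^o, (q \o u) \o v = q) /\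
       (forall q : E -> K^o, (q \o v) \o u = q) /\
       (exists C : K, forall q : F -> K^o, cpoly k q ->
          polynorm (q \o u) <= C * polynorm q) /\
       (exists C : K, forall q : E -> K^o, cpoly k q ->
          polynorm (q \o v) <= C * polynorm q)) /\
      ((forall x : E, `|u x| = `|x|) ->
         (forall q : F -> K^o, cpoly k q -> polynorm (q \o u) = polynorm q) /\
         (forall q : E -> K^o, cpoly k q -> polynorm (q \o v) = polynorm q)).

End Polys.

(* Main.v *)
Require Import Defs.
From mathcomp Require Import all_boot all_order all_algebra.
From mathcomp Require Import all_classical all_reals all_analysis.
From mathcomp Require Import complex.
From mathcomp Require Import ring.
Import numFieldNormedType.Exports.
Set Implicit Arguments. Unset Strict Implicit. Unset Printing Implicit Defensive.
Import Order.TTheory GRing.Theory Num.Theory.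
Local Open Scope ring_scope.
Local Open Scope classical_set_scope.

Section Aux.
Variable K : numFieldType.

Lemma upd_zero (X Y : lmodType K) j (A : ('I_j -> X) -> Y) : multilinear A ->
  forall i v, A (upd v i 0) = 0.
Proof.
move=> hA i v; have := hA i v 1 0 0; rewrite !scale1r addr0 => h.
apply/esym/(addrI (A (upd v i 0))); rewrite addr0.
by rewrite -h.
Qed.

Lemma hpolyZ (X Y : lmodType K) k (P : X -> Y) : hpoly k P ->
  forall (t : K) x, P (t *: x) = t ^+ k *: P x.
Proof.
move=> [A [hA hP]] t x; rewrite !hP.
pose w (m : nat) := fun l : 'I_k => if (l < m)%N then t *: x else x.
have key : forall m, (m <= k)%N -> A (w m) = t ^+ m *: A (w 0%N).
  elim=> [|m IH] hm; first by rewrite scale1r.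
  have hmk : (m < k)%N by [].
  have -> : w m.+1 = upd (w m) (Ordinal hmk) (t *: x + 0).
    apply/funext => l; rewrite /w /upd addr0 ltnS leq_eqVlt -val_eqE /=.
    by case: eqP.
  rewrite hA upd_zero // addr0.
  have -> : upd (w m) (Ordinal hmk) x = w m.
    apply/funext => l; rewrite /w /upd -val_eqE /=.
    by case: eqP => // ->; rewrite ltnn.
  by rewrite IH ?(ltnW hmk) // scalerA exprS.
have -> : (fun _ : 'I_k => t *: x) = w k.
  by apply/funext => l; rewrite /w ltn_ord.
have -> : (fun _ : 'I_k => x) = w 0%N by [].
exact: key.
Qed.

Lemma hpoly_comp (X Y Z : lmodType K) k (P : Y -> Z) (L : X -> Y) :
  (forall a x y, L (a *: x + y) = a *: L x + L y) -> hpoly k P -> hpoly k (P \o L).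
Proof.
move=> hL [A [hA hP]]; exists (fun w => A (L \o w)); split.
  move=> i v a x y /=.
  have E : forall z, L \o upd v i z = upd (L \o v) i (L z).
    by move=> z; apply/funext => l; rewrite /upd /=; case: eqP.
  by rewrite !E hL hA.
by move=> x /=; rewrite hP.
Qed.

Lemma L0 (a d : K) : 0 <= a -> (forall t, 0 < t -> t < 1 -> t * a <= d) -> a <= d.
Proof.
move=> a0 h.
have h2 : (0 : K) < 2 by rewrite ltr0n.
have hd : 0 <= d.
  apply: le_trans (h 2^-1 _ _); first by rewrite mulr_ge0 // invr_ge0 ltW.
    by rewrite invr_gt0.
  by rewrite invf_lt1 // ltr1n.
rewrite real_leNgt ?ger0_real //; apply/negP => hda.
have a0' : 0 < a by apply: le_lt_trans hd hda.
set t := (a + d) / (a *+ 2).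
have t0 : 0 < t by rewrite divr_gt0 ?pmulrn_lgt0 // (lt_le_trans a0') // lerDl.
have t1 : t < 1 by rewrite ltr_pdivrMr ?pmulrn_lgt0 // mul1r mulr2n ltrD2l.
have := h t t0 t1.
have -> : t * a = (a + d) / 2.
  by rewrite /t; field; rewrite ?pnatr_eq0 // lt0r_neq0.
rewrite ler_pdivrMr // mulr_natr mulr2n => h'.
have : d + d < a + d by rewrite ltrD2r.
by move/lt_geF; rewrite h'.
Qed.

Lemma L2 (k : nat) (a d : K) : 0 <= a ->
  (forall t, 0 < t -> t < 1 -> t ^+ k * a <= d) -> a <= d.
Proof.
have h2 : (0 : K) < 2 by rewrite ltr0n.
have i0 : (0 : K) < 2^-1 by rewrite invr_gt0.
have i1 : (2^-1 : K) < 1 by rewrite invf_lt1 // ltr1n.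
elim: k a => [|k IH] a a0 h.
  by have := h _ i0 i1; rewrite expr0 mul1r.
apply: IH => // t t0 t1.
apply: L0; first by rewrite mulr_ge0 // exprn_ge0 // ltW.
move=> s s0 s1.
set u := s + t - s * t.
have Eu : u = s + t * (1 - s) by rewrite /u; ring.
have Eu' : 1 - u = (1 - s) * (1 - t) by rewrite /u; ring.
have s1' : 0 < 1 - s by rewrite subr_gt0.
have t1' : 0 < 1 - t by rewrite subr_gt0.
have u0 : 0 < u by rewrite Eu addr_gt0 // mulr_gt0.
have u1 : u < 1 by rewrite -subr_gt0 Eu' mulr_gt0.
have su : s <= u by rewrite Eu lerDl mulr_ge0 // ltW.
have tu : t <= u.
  have -> : u = t + s * (1 - t) by rewrite /u; ring.
  by rewrite lerDl mulr_ge0 // ltW.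
apply: le_trans (h u u0 u1).
rewrite mulrA exprS; apply: ler_wpM2r => //.
apply: ler_pM => //; first exact: ltW.
  by rewrite exprn_ge0 // ltW.
by apply: lerXn2r => //; rewrite qualifE /= ltW.
Qed.

Lemma hom_bounded (X Y : normedModType K) k (f : X -> Y) :
  continuous f -> (forall (t : K) x, f (t *: x) = t ^+ k *: f x) ->
  exists M : K, 0 < M /\ forall x, `|x| <= 1 -> `|f x| <= M.
Proof.
move=> fc fh.
have : \forall t \near (0:X), `|f 0 - f t| < 1.
  by apply: cvgr_dist_lt; [exact: fc | exact: ltr01].
move/nbhs_norm0P => [/= e e0 he].
have h2 : (0 : K) < 2 by rewrite ltr0n.
set s := e / 2.
have hs : 0 < s by rewrite divr_gt0.
have hsk : 0 < s ^+ k by rewrite exprn_gt0.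
exists ((`|f 0| + 1) / s ^+ k); split.
  by rewrite divr_gt0 // ltr_pwDr.
move=> x x1.
have : `|f (s *: x)| < `|f 0| + 1.
  have := he (s *: x) => /=.
  rewrite normrZ gtr0_norm // => /(_ _)/wrap[].
    apply: le_lt_trans (_ : s * 1 < e).
      by rewrite ler_wpM2l // ltW.
    by rewrite mulr1 ltr_pdivrMr // ltr_pMr // ltr1n.
  move=> hlt.
  have -> : f (s *: x) = f 0 - (f 0 - f (s *: x)) by rewrite opprB addrC subrK.
  apply: le_lt_trans (ler_normB _ _) _.
  by rewrite ltrD2l.
rewrite fh normrZ normrX gtr0_norm // => hlt.
by rewrite ler_pdivlMr // mulrC ltW.
Qed.


Definition Kcomplete := forall S : set K, (exists s, S s) -> (forall s, S s -> 0 <= s) ->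
  (exists b, forall s, S s -> s <= b) ->
  exists c, (forall s, S s -> s <= c) /\ (forall d, (forall s, S s -> s <= d) -> c <= d).

Lemma polynorm_sup (X : normedModType K) k (q : X -> K^o) :
  Kcomplete -> cpoly k q -> is_sup_norm q (polynorm q).
Proof.
move=> KC [hq qc]; apply: xgetPex.
have [M [M0 hM]] := hom_bounded qc (hpolyZ hq).
have [|||c [c1 c2]] := KC [set r | exists x : X, `|x| <= 1 /\ r = `|q x|].
- by exists `|q 0|, 0; rewrite normr0 ler01.
- by move=> s [x [_ ->]].
- by exists M => s [x [x1 ->]]; apply: hM.
exists c; split.
  by move=> x x1; apply: c1; exists x.
by move=> d hd; apply: c2 => s [x [x1 ->]]; apply: hd.
Qed.

Lemma polynorm_eq (X Y : normedModType K) (q1 : X -> K^o) (q2 : Y -> K^o) :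
  (forall d, (forall x, `|x| <= 1 -> `|q1 x| <= d) <->
             (forall y, `|y| <= 1 -> `|q2 y| <= d)) ->
  polynorm q1 = polynorm q2.
Proof.
move=> h; rewrite /polynorm; congr (xget 0 _); apply/funext => c; apply/propext.
rewrite /is_sup_norm; split=> -[c1 c2]; split.
- by apply/h.
- by move=> d /h; apply: c2.
- by apply/h.
- by move=> d /h; apply: c2.
Qed.

Lemma cpoly_comp (X Y : normedModType K) k (q : Y -> K^o) (L : X -> Y) :
  (forall a x y, L (a *: x + y) = a *: L x + L y) -> continuous L ->
  cpoly k q -> cpoly k (q \o L).
Proof.
move=> hL Lc [hq qc]; split; first exact: hpoly_comp.
by move=> x; apply: continuous_comp; [exact: Lc | exact: qc].
Qed.

Lemma thm6_b_gen (E G : normedModType K) (j : {linear G -> E}) : continuous j ->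
  j @` [set x | `|x| < 1] = [set y | `|y| < 1] ->
  forall k (q : E -> K^o), cpoly k q -> cpoly k (q \o j) /\ polynorm (q \o j) = polynorm q.
Proof.
move=> jc jball k q cq; split; first by apply: cpoly_comp => // a x y; rewrite linearP.
have hq := hpolyZ cq.1.
apply: polynorm_eq => d; split => hd.
- move=> y y1; apply: (@L2 k) => // t t0 t1.
  have : [set y | `|y| < 1] (t *: y).
    rewrite /= normrZ gtr0_norm //; apply: le_lt_trans t1.
    by rewrite -{2}(mulr1 t) ler_wpM2l // ltW.
  rewrite -jball => -[x /= x1 jx].
  have := hd x (ltW x1); rewrite /= jx hq normrZ normrX gtr0_norm //.
- move=> x x1; apply: hd; apply: L0 => // t t0 t1.
  have : [set y | `|y| < 1] (j (t *: x)).
    rewrite -jball; exists (t *: x) => //=.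
    rewrite normrZ gtr0_norm //; apply: le_lt_trans t1.
    by rewrite -{2}(mulr1 t) ler_wpM2l // ltW.
  by rewrite /= linearZ normrZ gtr0_norm // => /ltW.
Qed.

Lemma thm6_c_gen (E F : normedModType K) (KC : Kcomplete) (u : {linear E -> F}) (v : F -> E) :
    continuous u -> continuous v -> cancel u v -> cancel v u ->
    forall k : nat,
      ((forall q : F -> K^o, cpoly k q -> cpoly k (q \o u)) /\
       (forall q : E -> K^o, cpoly k q -> cpoly k (q \o v)) /\
       (forall q : F -> K^o, (q \o u) \o v = q) /\
       (forall q : E -> K^o, (q \o v) \o u = q) /\
       (exists C : K, forall q : F -> K^o, cpoly k q ->
          polynorm (q \o u) <= C * polynorm q) /\
       (exists C : K, forall q : E -> K^o, cpoly k q ->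
          polynorm (q \o v) <= C * polynorm q)) /\
      ((forall x : E, `|u x| = `|x|) ->
         (forall q : F -> K^o, cpoly k q -> polynorm (q \o u) = polynorm q) /\
         (forall q : E -> K^o, cpoly k q -> polynorm (q \o v) = polynorm q)).
Proof.
move=> uc vc uv vu k.
have uL : forall a x y, u (a *: x + y) = a *: u x + u y by move=> a x y; rewrite linearP.
have vL : forall a x y, v (a *: x + y) = a *: v x + v y.
  by move=> a x y; rewrite -{1}(vu x) -{1}(vu y) -linearP uv.
have Cbound : forall (X Y : normedModType K) (L : X -> Y),
    (forall a x y, L (a *: x + y) = a *: L x + L y) -> continuous L ->
    exists C : K, forall q : Y -> K^o, cpoly k q -> polynorm (q \o L) <= C * polynorm q.
  move=> X Y L hL Lc.
  have [M [M0 hM]] : exists M : K, 0 < M /\ forall x, `|x| <= 1 -> `|L x| <= M.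
    apply: (@hom_bounded _ _ 1%N) => // t x.
    have L0' : L 0 = 0.
      have := hL 1 0 0; rewrite !scale1r addr0 => h.
      by apply/esym/(addrI (L 0)); rewrite addr0 -h.
    by rewrite expr1 -[t *: x]addr0 hL L0' addr0.
  exists (M ^+ k) => q cq.
  have s1 := polynorm_sup KC cq.
  have s2 := polynorm_sup KC (cpoly_comp hL Lc cq).
  apply: s2.2 => x x1 /=.
  have -> : L x = M *: (M^-1 *: L x) by rewrite scalerA divff ?scale1r // gt_eqF.
  rewrite (hpolyZ cq.1) normrZ normrX gtr0_norm //.
  apply: ler_wpM2l; first by rewrite exprn_ge0 // ltW.
  apply: s1.1.
  rewrite normrZ gtr0_norm ?invr_gt0 // ler_pdivrMl // mulr1.
  exact: hM.
split.
  split; first by move=> q; apply: cpoly_comp.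
  split; first by move=> q; apply: cpoly_comp.
  split; first by move=> q; apply/funext => y /=; rewrite vu.
  split; first by move=> q; apply/funext => y /=; rewrite uv.
  by split; apply: Cbound.
move=> uiso; split => q cq; apply: polynorm_eq => d; split => hd.
- by move=> y y1; rewrite -(vu y); apply: hd; rewrite -uiso vu.
- by move=> x x1; apply: hd; rewrite uiso.
- by move=> x x1; rewrite -(uv x); apply: hd; rewrite uiso.
- by move=> y y1; apply: hd; rewrite -uiso vu.
Qed.

End Aux.

Lemma odd_inj (R : realDomainType) n (x y : R) : odd n -> x ^+ n = y ^+ n -> x = y.
Proof.
move=> on e.
have n0 : (0 < n)%N by case: n on e.
have : `|x| == `|y| by rewrite -(eqrXn2 n0) // -!normrX e.
rewrite eqr_norm2 => /orP[/eqP//|/eqP xy].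
move: e; rewrite xy exprNn -signr_odd on expr1 mulN1r => /eqP.
rewrite eq_sym -subr_eq0 opprK -mulr2n mulrn_eq0 /= expf_eq0 => /andP[_ /eqP y0].
by rewrite y0 oppr0.
Qed.

Lemma thm6_a_gen (K : numFieldType) (b : bool) (E F : completeNormedModType K) :
  (forall n (x y : K), odd n -> b -> x ^+ n = y ^+ n -> x = y) -> thm6_a b E F.
Proof.
move=> hodd m n k P _ Psurj hn q1 q2 _ _ heq.
apply/funext => y; have [x <-] := Psurj y.
have /= e := congr1 (fun f => f x) heq.
case: hn => [hn1 | [no hb]]; first by move: e; rewrite hn1 !expr1.
exact: hodd no hb e.
Qed.

Lemma Kcomplete_R (R : realType) : Kcomplete R.
Proof.
move=> S [s Ss] S0 [b hb]; exists (sup S); split.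
  by move=> x Sx; apply: sup_upper_bound => //; split; [exists s | exists b].
by move=> d hd; apply: ge_sup => //; exists s.
Qed.

Lemma Kcomplete_C (R : realType) : Kcomplete R[i].
Proof.
move=> S [s Ss] S0 [b hb].
have re : forall z : R[i], 0 <= z -> (real_complex R (complex.Re z)) = z.
  by move=> z z0; rewrite RRe_real // ger0_real.
pose S' := [set r : R | S (r%:C)%C].
have S's : S' (complex.Re s) by rewrite /S' /= re // S0.
have ub : ubound S' (complex.Re b).
  by move=> r Sr; have := hb _ Sr; rewrite lecE /= => /andP[_].
exists ((sup S')%:C)%C; split.
  move=> x Sx; rewrite -(re x (S0 _ Sx)) lecR; apply: sup_upper_bound.
    by split; [exists (complex.Re s) | exists (complex.Re b)].
  by rewrite /S' /= re // S0.
move=> d hd; have d0 : 0 <= d by apply: le_trans (hd _ Ss); apply: S0.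
rewrite -(re d d0) lecR; apply: ge_sup; first by exists (complex.Re s).
by move=> r Sr; have := hd _ Sr; rewrite -(re d d0) lecR.
Qed.

Theorem mainTheorem6 (R : realType) :
  (forall E F G : completeNormedModType R,
     thm6_a true E F /\ thm6_b E G /\ thm6_c E F) /\
  (forall E F G : completeNormedModType R[i],
     thm6_a false E F /\ thm6_b E G /\ thm6_c E F).
Proof.
split => E F G; (split; [|split]).
- by apply: thm6_a_gen => n x y on _; exact: odd_inj.
- by move=> j jc jb k q cq; exact: thm6_b_gen.
- move=> u v uc vc uv vu k. exact (@thm6_c_gen R E F (@Kcomplete_R R) u v uc vc uv vu k).
- by apply: thm6_a_gen => n x y _.
- by move=> j jc jb k q cq; exact: thm6_b_gen.
- exact: (@thm6_c_gen R[i] E F (@Kcomplete_C R)).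
Qed.
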